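(* If $P$ is a projection algebra, then $\mathbb F(P)$ and $\mathbb M(P)$ are projection-generated DRC-semigroups, with $\mathbf P(\mathbb F(P))\cong\mathbf P(\mathbb M(P))\cong P$ as projection algebras.
   Context: Maps are written on the right and composed left to right. A projection algebra is a set $P$ with maps $\theta_p,\delta_p:P\to P$ ($p\in P$) such that for all $p,q$: $p\theta_p=p$, $p\delta_p=p$; $p\theta_{q\theta_p}=q\theta_p$, $p\delta_{q\delta_p}=q\delta_p$; $\theta_q\theta_{q\theta_p}=\theta_q\theta_p$, $\delta_q\delta_{q\delta_p}=\delta_q\delta_p$; $\theta_p\delta_p=\theta_p$, $\delta_p\theta_p=\delta_p$; $\theta_{p\delta_q}\theta_p=\theta_q\theta_p$, $\delta_{p\theta_q}\delta_p=\delta_q\delta_p$. Isomorphisms are bijections preserving all $\theta_p,\delta_p$ operations. Write $p\,\mathscr F\,q$ iff $p=q\delta_p$ and $q=p\theta_q$. A DRC-semigroup is $(S,\cdot,D,R)$, $(S,\cdot)$ a semigroup, $D,R:S\to S$ with, for all $a,b$: $D(a)a=a$, $aR(a)=a$; $D(ab)=D(aD(b))$, $R(ab)=R(R(a)b)$; $D(ab)=D(a)D(ab)D(a)$, $R(ab)=R(b)R(ab)R(b)$; $R(D(a))=D(a)$, $D(R(a))=R(a)$. $\mathbf P(S)=\{D(a):a\in S\}$ is a projection algebra under $q\theta_p=R(qp)$, $q\delta_p=D(pq)$; $S$ is projection-generated if $\mathbf P(S)$ generates $S$ as a semigroup. $\mathbb F(P)$ is the semigroup presented by generators $x_p$ ($p\in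 P$) and relations $x_p^2=x_p$, $x_px_q=x_px_{p\theta_q}$, $x_px_q=x_{q\delta_p}x_q$ ($p,q\in P$). Every element of $\mathbb F(P)$ equals $\overline{x_{p_1}\cdots x_{p_k}}$ for some $p_1\mathscr F\cdots\mathscr F p_k$, and $p_1,p_k$ are determined by the element; unary operations are $D(\overline{x_{p_1}\cdots x_{p_k}})=\overline{x_{p_1}}$, $R(\overline{x_{p_1}\cdots x_{p_k}})=\overline{x_{p_k}}$. $\mathbb M(P)$ is the subsemigroup of $\mathcal T_P\times\mathcal T_P^{\mathrm{op}}$ ($\mathcal T_P$ the full transformation semigroup on $P$, product $(\alpha,\alpha')(\beta,\beta')=(\alpha\beta,\beta'\alpha')$) generated by $\hat p=(\theta_p,\delta_p)$, $p\in P$; every element equals $\hat p_1\cdots\hat p_k$ with $p_1\mathscr F\cdots\mathscr F p_k$, with $p_1,p_k$ determined, and $D(\hat p_1\cdots\hat p_k)=\hat p_1$, $R(\hat p_1\cdots\hat p_k)=\hat p_k$. *)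

(* Defs.v *)
(* Maps are written on the right: [theta p q] stands for
   q theta_p and [delta p q] for q delta_p. *)
From Stdlib Require Import List ClassicalEpsilon.
Import ListNotations.
Set Implicit Arguments.

Record proj_alg (P : Type) (theta delta : P -> P -> P) : Prop := {
  pa_th_id : forall p, theta p p = p;
  pa_de_id : forall p, delta p p = p;
  pa_th2 : forall p q, theta (theta p q) p = theta p q;
  pa_de2 : forall p q, delta (delta p q) p = delta p q;
  (* theta_q theta_{q theta_p} = theta_q theta_p  (composition left to right) *)
  pa_th3 : forall p q r, theta (theta p q) (theta q r) = theta p (theta q r);
  pa_de3 : forall p q r, delta (delta p q) (delta q r) = delta p (delta q r);
  (* theta_p delta_p = theta_p ; delta_p theta_p = delta_p *)
  pa_th_de : forall p r, delta p (theta p r) = theta p r;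
  pa_de_th : forall p r, theta p (delta p r) = delta p r;
  (* theta_{p delta_q} theta_p = theta_q theta_p ; delta_{p theta_q} delta_p = delta_q delta_p *)
  pa_th5 : forall p q r, theta p (theta (delta q p) r) = theta p (theta q r);
  pa_de5 : forall p q r, delta p (delta (theta q p) r) = delta p (delta q r)
}.

Definition Frel (P : Type) (theta delta : P -> P -> P) (p q : P) : Prop :=
  p = delta p q /\ q = theta q p.

Fixpoint fchain (P : Type) (theta delta : P -> P -> P) (p : P) (w : list P) : Prop :=
  match w with
  | nil => True
  | q :: w' => Frel theta delta p q /\ fchain theta delta q w'
  end.

Record DRC_semigroup (S : Type) (mul : S -> S -> S) (D R : S -> S) : Prop := {
  drc_assoc : forall a b c, mul (mul a b) c = mul a (mul b c);
  drc_Dl : forall a, mul (D a) a = a;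
  drc_Rr : forall a, mul a (R a) = a;
  drc_D2 : forall a b, D (mul a b) = D (mul a (D b));
  drc_R2 : forall a b, R (mul a b) = R (mul (R a) b);
  drc_D3 : forall a b, D (mul a b) = mul (mul (D a) (D (mul a b))) (D a);
  drc_R3 : forall a b, R (mul a b) = mul (mul (R b) (R (mul a b))) (R b);
  drc_RD : forall a, R (D a) = D a;
  drc_DR : forall a, D (R a) = R a
}.

Inductive sgen (S : Type) (mul : S -> S -> S) (X : S -> Prop) : S -> Prop :=
  | sgen_in : forall x, X x -> sgen mul X x
  | sgen_mul : forall x y, sgen mul X x -> sgen mul X y -> sgen mul X (mul x y).

Definition projs (S : Type) (D : S -> S) (e : S) : Prop := exists a, e = D a.

Definition proj_generated (S : Type) (mul : S -> S -> S) (D : S -> S) : Prop :=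
  forall a, sgen mul (projs D) a.

(* f : P -> S is an isomorphism of projection algebras from P onto P(S),
   where P(S) carries  q theta_p = R(qp),  q delta_p = D(pq). *)
Definition PS_iso (P : Type) (theta delta : P -> P -> P)
    (S : Type) (mul : S -> S -> S) (D R : S -> S) (f : P -> S) : Prop :=
  (forall p q, f p = f q -> p = q) /\
  (forall e, projs D e <-> exists p, e = f p) /\
  (forall p q, f (theta p q) = R (mul (f q) (f p))) /\
  (forall p q, f (delta p q) = D (mul (f p) (f q))).

Section Constructions.
Context {P : Type} (theta delta : P -> P -> P).

Inductive fcong : list P -> list P -> Prop :=
  | fc_refl : forall w, fcong w w
  | fc_sym : forall u v, fcong u v -> fcong v u
  | fc_trans : forall u v w, fcong u v -> fcong v w -> fcong u w
  | fc_idem : forall u v p, fcong (u ++ [p; p] ++ v) (u ++ [p] ++ v)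
  | fc_th : forall u v p q, fcong (u ++ [p; q] ++ v) (u ++ [p; theta q p] ++ v)
  | fc_de : forall u v p q, fcong (u ++ [p; q] ++ v) (u ++ [delta p q; q] ++ v).

Record FP : Type := mkFP {
  fp_set : list P -> Prop;
  fp_ok : exists w, w <> nil /\ fp_set = fcong w
}.

Definition fp_of (w : list P) (H : w <> nil) : FP :=
  @mkFP (fcong w) (ex_intro _ w (conj H eq_refl)).

Definition fp_rep (a : FP) : list P :=
  epsilon (inhabits nil) (fun w => w <> nil /\ fp_set a = fcong w).

Lemma fp_rep_spec (a : FP) : fp_rep a <> nil /\ fp_set a = fcong (fp_rep a).
Proof. unfold fp_rep. apply epsilon_spec. exact (fp_ok a). Qed.

Lemma app_nonnil (u v : list P) : u <> nil -> u ++ v <> nil.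
Proof. destruct u; simpl; [contradiction | discriminate]. Qed.

Definition fmul (a b : FP) : FP :=
  fp_of (app_nonnil (fp_rep b) (proj1 (fp_rep_spec a))).

Definition xg (p : P) : FP :=
  @fp_of [p] (fun H : [p] = nil => @nil_cons P p nil (eq_sym H)).

Definition fprod (p : P) (w : list P) : FP :=
  fold_left (fun acc q => fmul acc (xg q)) w (xg p).

Definition FD (a : FP) : FP :=
  epsilon (inhabits a) (fun b => exists p w,
    fchain theta delta p w /\ a = fprod p w /\ b = xg p).
Definition FR (a : FP) : FP :=
  epsilon (inhabits a) (fun b => exists p w,
    fchain theta delta p w /\ a = fprod p w /\ b = xg (last w p)).

(* ---------- M(P) : subsemigroup of T_P x T_P^op generated by (theta_p, delta_p) ---------- *)
Definition tpair : Type := ((P -> P) * (P -> P))%type.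

Definition tmul (a b : tpair) : tpair :=
  (fun x => fst b (fst a x), fun x => snd a (snd b x)).

Definition hat (p : P) : tpair := (theta p, delta p).

Inductive Mgen : tpair -> Prop :=
  | Mg_hat : forall p, Mgen (hat p)
  | Mg_mul : forall a b, Mgen a -> Mgen b -> Mgen (tmul a b).

Definition MP : Type := { x : tpair | Mgen x }.

Definition mmul (a b : MP) : MP :=
  exist _ (tmul (proj1_sig a) (proj1_sig b)) (Mg_mul (proj2_sig a) (proj2_sig b)).

Definition mhat (p : P) : MP := exist _ (hat p) (Mg_hat p).

Definition mprod (p : P) (w : list P) : MP :=
  fold_left (fun acc q => mmul acc (mhat q)) w (mhat p).

Definition MD (a : MP) : MP :=
  epsilon (inhabits a) (fun b => exists p w,
    fchain theta delta p w /\ a = mprod p w /\ b = mhat p).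
Definition MR (a : MP) : MP :=
  epsilon (inhabits a) (fun b => exists p w,
    fchain theta delta p w /\ a = mprod p w /\ b = mhat (last w p)).

End Constructions.

(* Main.v *)
Require Import Defs.
From Stdlib Require Import List ClassicalEpsilon FunctionalExtensionality PropExtensionality ProofIrrelevance.
Import ListNotations.
Set Implicit Arguments.

Section Alg.
Variables (P : Type) (theta delta : P -> P -> P).
Hypothesis HP : proj_alg theta delta.

Definition le (a b : P) := theta b a = a.

Lemma th_idem p x : theta p (theta p x) = theta p x.
Proof.
  rewrite <- (pa_th_de HP p x) at 1. rewrite (pa_de_th HP). apply (pa_th_de HP).
Qed.
Lemma de_idem p x : delta p (delta p x) = delta p x.
Proof.
  rewrite <- (pa_de_th HP p x) at 1. rewrite (pa_th_de HP). apply (pa_de_th HP).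
Qed.
Lemma le_de a b : le a b -> delta b a = a.
Proof. unfold le; intro H. rewrite <- H at 1. rewrite (pa_th_de HP). exact H. Qed.
Lemma de_le a b : delta b a = a -> le a b.
Proof. unfold le; intro H. rewrite <- H at 1. rewrite (pa_de_th HP). exact H. Qed.
Lemma le_th_img p x : le (theta p x) p.
Proof. apply th_idem. Qed.
Lemma le_de_img p x : le (delta p x) p.
Proof. unfold le. apply (pa_de_th HP). Qed.
Lemma top_th q p : le q p -> theta q p = q.
Proof. intro H. pose proof (pa_th2 HP p q) as E. unfold le in H. rewrite H in E. exact E. Qed.
Lemma top_de q p : le q p -> delta q p = q.
Proof. intro H. pose proof (pa_de2 HP p q) as E. rewrite (le_de H) in E. exact E. Qed.
Lemma F2th p q : theta (theta p q) q = theta p q.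
Proof. pose proof (pa_th3 HP p q q) as E. rewrite (pa_th_id HP) in E. exact E. Qed.
Lemma F2de p q : delta (delta p q) q = delta p q.
Proof. pose proof (pa_de3 HP p q q) as E. rewrite (pa_de_id HP) in E. exact E. Qed.
Lemma Ld t s : delta t (theta s t) = delta t s.
Proof.
  pose proof (pa_de5 HP t s s) as E. rewrite (pa_de_id HP) in E.
  rewrite (top_de (le_th_img s t)) in E. exact E.
Qed.
Lemma Lt t s : theta t (delta s t) = theta t s.
Proof.
  pose proof (pa_th5 HP t s s) as E. rewrite (pa_th_id HP) in E.
  rewrite (top_th (le_de_img s t)) in E. exact E.
Qed.
Lemma down_de p' p x : le p' p -> delta p' x = delta p' (delta p x).
Proof.
  intro H. pose proof (pa_de5 HP p' p x) as E. unfold le in H. rewrite H, de_idem in E. exact E.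
Qed.
Lemma antisym a b : le a b -> le b a -> a = b.
Proof.
  intros H1 H2. pose proof (pa_de2 HP a b) as E.
  rewrite (le_de H2) in E. rewrite (le_de H1) in E. exact E.
Qed.
Lemma mono_de s z' z : le z' z -> le (delta s z') (delta s z).
Proof.
  intro H. pose proof (pa_de3 HP s z z') as E. rewrite (le_de H) in E.
  rewrite <- E. apply le_de_img.
Qed.
Lemma mono_th s z' z : le z' z -> le (theta s z') (theta s z).
Proof.
  intro H. pose proof (pa_th3 HP s z z') as E. unfold le in H. rewrite H in E.
  rewrite <- E. apply le_th_img.
Qed.

Notation fc := (fcong theta delta).

Lemma fc_ctx u v a b : fc u v -> fc (a ++ u ++ b) (a ++ v ++ b).
Proof.
  induction 1.
  - apply fc_refl.
  - apply fc_sym; assumption.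
  - eapply fc_trans; eassumption.
  - replace (a ++ (u ++ [p; p] ++ v) ++ b) with ((a ++ u) ++ [p; p] ++ (v ++ b))
      by (rewrite <- !app_assoc; reflexivity).
    replace (a ++ (u ++ [p] ++ v) ++ b) with ((a ++ u) ++ [p] ++ (v ++ b))
      by (rewrite <- !app_assoc; reflexivity).
    apply fc_idem.
  - replace (a ++ (u ++ [p; q] ++ v) ++ b) with ((a ++ u) ++ [p; q] ++ (v ++ b))
      by (rewrite <- !app_assoc; reflexivity).
    replace (a ++ (u ++ [p; theta q p] ++ v) ++ b) with ((a ++ u) ++ [p; theta q p] ++ (v ++ b))
      by (rewrite <- !app_assoc; reflexivity).
    apply fc_th.
  - replace (a ++ (u ++ [p; q] ++ v) ++ b) with ((a ++ u) ++ [p; q] ++ (v ++ b))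
      by (rewrite <- !app_assoc; reflexivity).
    replace (a ++ (u ++ [delta p q; q] ++ v) ++ b) with ((a ++ u) ++ [delta p q; q] ++ (v ++ b))
      by (rewrite <- !app_assoc; reflexivity).
    apply fc_de.
Qed.

Lemma fc_cons x u v : fc u v -> fc (x :: u) (x :: v).
Proof. intro H. pose proof (fc_ctx [x] [] H) as E. rewrite !app_nil_r in E. exact E. Qed.
Lemma fc_appr u v b : fc u v -> fc (u ++ b) (v ++ b).
Proof. intro H. exact (fc_ctx [] b H). Qed.

Lemma fc_idem0 p w : fc (p :: p :: w) (p :: w).
Proof. exact (fc_idem theta delta [] w p). Qed.

Lemma propagate w : forall p p', fchain theta delta p w -> le p' p ->
  exists w', fchain theta delta p' w' /\ fc (p' :: w) (p' :: w').
Proof.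
  induction w as [|r w IH]; intros p p' Hc Hle.
  - exists []. split; [exact I | apply fc_refl].
  - destruct Hc as [[Hp Hr] Hc].
    set (r' := theta r p').
    destruct (IH r r' Hc (le_th_img r p')) as [w' [Hc' Hf]].
    exists (r' :: w'). split.
    + split; [split|exact Hc'].
      * unfold r'. rewrite Ld. rewrite (down_de _ Hle). rewrite <- Hp.
        symmetry. apply top_de; exact Hle.
      * unfold r'. symmetry. apply F2th.
    + eapply fc_trans. exact (fc_th theta delta [] w p' r).
      apply fc_cons. exact Hf.
Qed.

Lemma normal_form u : forall q, exists p w, fchain theta delta p w /\ fc (q :: u) (p :: w).
Proof.
  induction u as [|r u IH]; intro q.
  - exists q, []. split; [exact I | apply fc_refl].
  - destruct (IH r) as [p [w [Hc Hf]]].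
    set (q' := delta q p). set (p' := theta p q').
    destruct (propagate _ Hc (le_th_img p q')) as [w' [Hc' Hf']].
    exists q', (p' :: w'). split.
    + split; [split|exact Hc'].
      * unfold p'. rewrite Ld. unfold q'. symmetry. apply F2de.
      * unfold p'. symmetry. apply F2th.
    + eapply fc_trans. apply fc_cons. exact Hf.
      eapply fc_trans. exact (fc_de theta delta [] w q p).
      eapply fc_trans. exact (fc_th theta delta [] w q' p).
      apply fc_cons. exact Hf'.
Qed.

Lemma last_indep (l : list P) a b : l <> [] -> last l a = last l b.
Proof.
  induction l as [|x l IH]; intro H; [contradiction|].
  destruct l as [|y l]; [reflexivity|]. simpl. simpl in IH. apply IH. discriminate.
Qed.
Lemma last_cons (w : list P) q p : last (q :: w) p = last w q.
Proof. destruct w as [|y w]; [reflexivity|]. change (last (y::w) p = last (y::w) q). apply last_indep. discriminate. Qed.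

Lemma fc_last w : forall p, fc ((p :: w) ++ [last w p]) (p :: w).
Proof.
  induction w as [|q w IH]; intro p.
  - exact (fc_idem theta delta [] [] p).
  - rewrite last_cons. simpl. apply fc_cons. exact (IH q).
Qed.

Definition odfl (d : P) (o : option P) := match o with Some y => y | None => d end.
Definition dF (u : list P) (o : option P) : option P :=
  fold_right (fun p acc => Some (delta p (odfl p acc))) o u.
Definition rF (u : list P) (o : option P) : option P :=
  fold_left (fun acc p => Some (theta p (odfl p acc))) u o.

Lemma dF_app u v o : dF (u ++ v) o = dF u (dF v o).
Proof. unfold dF. apply fold_right_app. Qed.
Lemma rF_app u v o : rF (u ++ v) o = rF v (rF u o).
Proof. unfold rF. apply fold_left_app. Qed.

Lemma dF_inv u v : fc u v -> forall o, dF u o = dF v o.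
Proof.
  induction 1; intro o.
  - reflexivity.
  - symmetry; auto.
  - rewrite IHfcong1; auto.
  - rewrite !dF_app. f_equal. simpl. rewrite de_idem. reflexivity.
  - rewrite !dF_app. f_equal. simpl.
    destruct (dF v o) as [y|]; simpl.
    + rewrite (pa_de5 HP). reflexivity.
    + rewrite !(pa_de_id HP). rewrite Ld. reflexivity.
  - rewrite !dF_app. f_equal. simpl.
    destruct (dF v o) as [y|]; simpl.
    + rewrite (pa_de3 HP). reflexivity.
    + rewrite !(pa_de_id HP). rewrite F2de. reflexivity.
Qed.

Lemma rF_some u : forall x, rF u (Some x) = Some (fold_left (fun acc q => theta q acc) u x).
Proof. induction u as [|q u IH]; intro x; [reflexivity|]. simpl. apply IH. Qed.

Lemma rF_inv u v : fc u v -> forall o, rF u o = rF v o.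
Proof.
  induction 1; intro o.
  - reflexivity.
  - symmetry; auto.
  - rewrite IHfcong1; auto.
  - rewrite !rF_app. f_equal. simpl. rewrite th_idem. reflexivity.
  - rewrite !rF_app. f_equal. simpl.
    rewrite (pa_th3 HP). reflexivity.
  - rewrite !rF_app. f_equal. simpl.
    destruct (rF u o) as [y|]; simpl.
    + rewrite (pa_th5 HP). reflexivity.
    + rewrite !(pa_th_id HP). rewrite Lt. reflexivity.
Qed.

Definition DW (p : P) (w : list P) := delta p (odfl p (dF w None)).
Definition RW (p : P) (w : list P) := fold_left (fun acc q => theta q acc) w p.

Lemma dF_DW p w : dF (p :: w) None = Some (DW p w).
Proof. reflexivity. Qed.
Lemma rF_RW p w : rF (p :: w) None = Some (RW p w).
Proof. simpl. rewrite (pa_th_id HP). apply rF_some. Qed.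

Lemma DW_chain w : forall p, fchain theta delta p w -> DW p w = p.
Proof.
  induction w as [|q w IH]; intros p Hc.
  - apply (pa_de_id HP).
  - destruct Hc as [[Hp Hq] Hc]. unfold DW. rewrite dF_DW. simpl.
    rewrite (IH q Hc). symmetry; exact Hp.
Qed.
Lemma RW_chain w : forall p, fchain theta delta p w -> RW p w = last w p.
Proof.
  induction w as [|q w IH]; intros p Hc.
  - reflexivity.
  - destruct Hc as [[Hp Hq] Hc]. rewrite last_cons. unfold RW. simpl. rewrite <- Hq.
    exact (IH q Hc).
Qed.

Lemma DW_inv p w q v : fc (p :: w) (q :: v) -> DW p w = DW q v.
Proof. intro H. pose proof (dF_inv H None) as E. rewrite !dF_DW in E. injection E; auto. Qed.
Lemma RW_inv p w q v : fc (p :: w) (q :: v) -> RW p w = RW q v.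
Proof. intro H. pose proof (rF_inv H None) as E. rewrite !rF_RW in E. injection E; auto. Qed.

Lemma D_mono w : forall p e, le (delta p (odfl p (dF w (Some e)))) (delta p (odfl p (dF w None))).
Proof.
  induction w as [|q w IH]; intros p e.
  - simpl. rewrite (pa_de_id HP). apply le_de_img.
  - simpl. apply mono_de. apply IH.
Qed.
Lemma R_mono v : forall a b, le a b ->
  le (fold_left (fun acc q => theta q acc) v a) (fold_left (fun acc q => theta q acc) v b).
Proof.
  induction v as [|q v IH]; intros a b H; [exact H|]. simpl. apply IH. apply mono_th. exact H.
Qed.

Lemma fc_sandwich d r : le r d -> fc [d; r; d] [r].
Proof.
  intro H.
  eapply fc_trans. exact (fc_de theta delta [] [d] d r). simpl. rewrite (le_de H).
  eapply fc_trans. exact (fc_idem theta delta [] [d] r). simpl.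
  eapply fc_trans. exact (fc_th theta delta [] [] r d). simpl. rewrite H.
  exact (fc_idem theta delta [] [] r).
Qed.

End Alg.
Section Gen.
Variables (P : Type) (theta delta : P -> P -> P).
Hypothesis HP : proj_alg theta delta.
Variables (S : Type) (mul : S -> S -> S) (gen : P -> S) (D R : S -> S).
Definition prod (p : P) (w : list P) : S := fold_left (fun acc q => mul acc (gen q)) w (gen p).
Hypothesis H_assoc : forall a b c, mul (mul a b) c = mul a (mul b c).
Hypothesis H_idem : forall p, mul (gen p) (gen p) = gen p.
Hypothesis H_th : forall p q, mul (gen p) (gen q) = mul (gen p) (gen (theta q p)).
Hypothesis H_de : forall p q, mul (gen p) (gen q) = mul (gen (delta p q)) (gen q).

Notation fc := (fcong theta delta).

Lemma fold_mul v : forall x y, fold_left (fun acc q => mul acc (gen q)) v (mul x y)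
  = mul x (fold_left (fun acc q => mul acc (gen q)) v y).
Proof.
  induction v as [|r v IH]; intros x y; [reflexivity|]. simpl. rewrite H_assoc. apply IH.
Qed.
Lemma prod_app p w q v : prod p (w ++ q :: v) = mul (prod p w) (prod q v).
Proof. unfold prod. rewrite fold_left_app. simpl. apply fold_mul. Qed.

Definition ev (u : list P) : option S := match u with [] => None | p :: w => Some (prod p w) end.
Definition omul (a b : option S) : option S :=
  match a, b with
  | None, _ => b
  | _, None => a
  | Some x, Some y => Some (mul x y)
  end.
Lemma ev_app u v : ev (u ++ v) = omul (ev u) (ev v).
Proof.
  destruct u as [|p w]; [reflexivity|].
  destruct v as [|q v]; simpl.
  - rewrite app_nil_r. reflexivity.
  - rewrite prod_app. reflexivity.
Qed.
Lemma omul_assoc a b c : omul (omul a b) c = omul a (omul b c).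
Proof. destruct a, b, c; simpl; try reflexivity. rewrite H_assoc; reflexivity. Qed.

Lemma ev_inv u v : fc u v -> ev u = ev v.
Proof.
  induction 1.
  - reflexivity.
  - auto.
  - congruence.
  - rewrite !ev_app. f_equal. f_equal. unfold ev, prod; simpl. rewrite H_idem. reflexivity.
  - rewrite !ev_app. f_equal. f_equal. unfold ev, prod; simpl. rewrite (H_th p q). reflexivity.
  - rewrite !ev_app. f_equal. f_equal. unfold ev, prod; simpl. rewrite (H_de p q). reflexivity.
Qed.
Lemma prod_inv p w q v : fc (p :: w) (q :: v) -> prod p w = prod q v.
Proof. intro H. pose proof (ev_inv H) as E. simpl in E. injection E; auto. Qed.

Lemma gen_prod p w : mul (gen p) (prod p w) = prod p w.
Proof.
  pose proof (prod_app p [] p w) as E. change ([] ++ p :: w) with (p :: w) in E.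
  change (prod p []) with (gen p) in E. rewrite <- E.
  apply prod_inv. apply fc_idem0.
Qed.

Hypothesis H_surj : forall a, exists p w, a = prod p w.
Hypothesis H_inj : forall p w q v, prod p w = prod q v -> DW delta p w = DW delta q v /\ RW theta p w = RW theta q v.
Hypothesis HD : forall a, D a = epsilon (inhabits a) (fun b => exists p w,
    fchain theta delta p w /\ a = prod p w /\ b = gen p).
Hypothesis HR : forall a, R a = epsilon (inhabits a) (fun b => exists p w,
    fchain theta delta p w /\ a = prod p w /\ b = gen (last w p)).

Lemma DG p w : D (prod p w) = gen (DW delta p w).
Proof.
  rewrite HD.
  match goal with |- epsilon ?i ?Q = _ => assert (Hs : Q (epsilon i Q)) end.
  { apply epsilon_spec.
    destruct (normal_form HP w p) as [p' [w' [Hc Hf]]].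
    exists (gen p'), p', w'. split; [exact Hc|]. split; [|reflexivity].
    apply prod_inv; exact Hf. }
  destruct Hs as [p'' [w'' [Hc [E1 E2]]]]. rewrite E2.
  destruct (H_inj _ _ _ _ E1) as [E3 _]. rewrite E3. rewrite (DW_chain HP _ _ Hc). reflexivity.
Qed.

Lemma RG p w : R (prod p w) = gen (RW theta p w).
Proof.
  rewrite HR.
  match goal with |- epsilon ?i ?Q = _ => assert (Hs : Q (epsilon i Q)) end.
  { apply epsilon_spec.
    destruct (normal_form HP w p) as [p' [w' [Hc Hf]]].
    exists (gen (last w' p')), p', w'. split; [exact Hc|]. split; [|reflexivity].
    apply prod_inv; exact Hf. }
  destruct Hs as [p'' [w'' [Hc [E1 E2]]]]. rewrite E2.
  destruct (H_inj _ _ _ _ E1) as [_ E3]. rewrite E3. rewrite (@RW_chain P theta delta _ _ Hc). reflexivity.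
Qed.

Lemma gen_main : DRC_semigroup mul D R /\ proj_generated mul D /\ PS_iso theta delta mul D R gen.
Proof.
  assert (Dgen : forall q, D (gen q) = gen q).
  { intro q. change (gen q) with (prod q []) at 1. rewrite DG. unfold DW. simpl.
    rewrite (pa_de_id HP). reflexivity. }
  split; [|split].
  - constructor.
    + exact H_assoc.
    + intro a. destruct (H_surj a) as [p [w ->]]. rewrite DG.
      destruct (normal_form HP w p) as [p' [w' [Hc Hf]]].
      rewrite (DW_inv HP Hf), (DW_chain HP _ _ Hc).
      pose proof (prod_app p' [] p w) as E. change ([] ++ p :: w) with (p :: w) in E.
      change (prod p' []) with (gen p') in E. rewrite <- E.
      apply prod_inv. eapply fc_trans. apply fc_cons. exact Hf.
      eapply fc_trans. apply fc_idem0. apply fc_sym. exact Hf.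
    + intro a. destruct (H_surj a) as [p [w ->]]. rewrite RG.
      destruct (normal_form HP w p) as [p' [w' [Hc Hf]]].
      rewrite (RW_inv HP Hf), (@RW_chain P theta delta _ _ Hc).
      change (gen (last w' p')) with (prod (last w' p') []).
      rewrite <- prod_app. apply prod_inv.
      change (fc ((p :: w) ++ [last w' p']) (p :: w)).
      eapply fc_trans. apply fc_appr. exact Hf.
      eapply fc_trans. apply fc_last. apply fc_sym. exact Hf.
    + intros a b. destruct (H_surj a) as [p [w ->]]. destruct (H_surj b) as [q [v ->]].
      rewrite DG. change (gen (DW delta q v)) with (prod (DW delta q v) []).
      rewrite <- !prod_app. rewrite !DG. f_equal.
      unfold DW. rewrite !dF_app. rewrite dF_DW. simpl. rewrite (pa_de_id HP). reflexivity.
    + intros a b. destruct (H_surj a) as [p [w ->]]. destruct (H_surj b) as [q [v ->]].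
      rewrite (RG p w). change (gen (RW theta p w)) with (prod (RW theta p w) []).
      rewrite <- !prod_app. rewrite !RG. f_equal.
      unfold RW. rewrite fold_left_app. reflexivity.
    + intros a b. destruct (H_surj a) as [p [w ->]]. destruct (H_surj b) as [q [v ->]].
      rewrite <- prod_app. rewrite !DG.
      change (gen (DW delta p (w ++ q :: v)) =
              prod (DW delta p w) [DW delta p (w ++ q :: v); DW delta p w]).
      change (gen (DW delta p (w ++ q :: v))) with (prod (DW delta p (w ++ q :: v)) []).
      apply prod_inv. apply fc_sym. apply (fc_sandwich HP).
      unfold DW at 1. rewrite dF_app. rewrite dF_DW. apply (D_mono HP).
    + intros a b. destruct (H_surj a) as [p [w ->]]. destruct (H_surj b) as [q [v ->]].
      rewrite <- prod_app. rewrite !RG.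
      change (gen (RW theta p (w ++ q :: v)) =
              prod (RW theta q v) [RW theta p (w ++ q :: v); RW theta q v]).
      change (gen (RW theta p (w ++ q :: v))) with (prod (RW theta p (w ++ q :: v)) []).
      apply prod_inv. apply fc_sym. apply (fc_sandwich HP).
      unfold RW. rewrite fold_left_app. simpl. apply (R_mono HP).
      apply (le_th_img HP).
    + intro a. destruct (H_surj a) as [p [w ->]]. rewrite DG.
      change (gen (DW delta p w)) with (prod (DW delta p w) []). rewrite RG.
      reflexivity.
    + intro a. destruct (H_surj a) as [p [w ->]]. rewrite RG.
      change (gen (RW theta p w)) with (prod (RW theta p w) []). rewrite DG.
      unfold DW. simpl. rewrite (pa_de_id HP). reflexivity.
  - intro a. destruct (H_surj a) as [p [w ->]]. unfold prod.
    assert (Hg : forall q, sgen mul (projs D) (gen q)).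
    { intro q. apply sgen_in. exists (gen q). symmetry. apply Dgen. }
    generalize (Hg p). generalize (gen p). induction w as [|q w IH]; intros x Hx; [exact Hx|].
    simpl. apply IH. apply sgen_mul; [exact Hx | apply Hg].
  - split; [|split; [|split]].
    + intros p q E. destruct (H_inj p [] q [] E) as [E1 _]. unfold DW in E1. simpl in E1.
      rewrite !(pa_de_id HP) in E1. exact E1.
    + intro e. split.
      * intros [a ->]. destruct (H_surj a) as [p [w ->]]. rewrite DG. eexists; reflexivity.
      * intros [p ->]. exists (gen p). symmetry; apply Dgen.
    + intros p q. change (mul (gen q) (gen p)) with (prod q [p]). rewrite RG. reflexivity.
    + intros p q. change (mul (gen p) (gen q)) with (prod p [q]). rewrite DG.
      unfold DW. simpl. rewrite (pa_de_id HP). reflexivity.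
Qed.

End Gen.

Section FInst.
Variables (P : Type) (theta delta : P -> P -> P).
Hypothesis HP : proj_alg theta delta.
Notation fc := (fcong theta delta).
Notation FPt := (FP theta delta).

Lemma fp_eq (a b : FPt) : fp_set a = fp_set b -> a = b.
Proof.
  destruct a as [sa ha], b as [sb hb]; simpl; intros E. subst sb.
  f_equal. apply proof_irrelevance.
Qed.

Lemma fc_ext u v : fc u v -> fc u = fc v.
Proof.
  intro H. apply functional_extensionality; intro x. apply propositional_extensionality.
  split; intro H'.
  - eapply fc_trans; [apply fc_sym; exact H | exact H'].
  - eapply fc_trans; [exact H | exact H'].
Qed.
Lemma fc_of_ext u v : fc u = fc v -> fc u v.
Proof. intro E. rewrite E. apply fc_refl. Qed.

Lemma set_rep (a : FPt) : fp_set a = fc (fp_rep a).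
Proof. exact (proj2 (fp_rep_spec a)). Qed.

Lemma fmul_set (a b : FPt) u v : fp_set a = fc u -> fp_set b = fc v ->
  fp_set (fmul a b) = fc (u ++ v).
Proof.
  intros Ea Eb. unfold fmul, fp_of. simpl. apply fc_ext.
  rewrite set_rep in Ea, Eb.
  apply fc_of_ext in Ea. apply fc_of_ext in Eb.
  eapply fc_trans. apply fc_appr. exact Ea.
  pose proof (fc_ctx u [] Eb) as E. rewrite !app_nil_r in E. exact E.
Qed.

Lemma fprod_set w : forall p, fp_set (fprod theta delta p w) = fc (p :: w).
Proof.
  intro p. unfold fprod.
  assert (G : forall x u, fp_set x = fc u ->
     fp_set (fold_left (fun acc q => fmul acc (xg theta delta q)) w x) = fc (u ++ w)).
  { induction w as [|q w IH]; intros x u Hx.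
    - rewrite app_nil_r. exact Hx.
    - simpl. replace (u ++ q :: w) with ((u ++ [q]) ++ w) by (rewrite <- app_assoc; reflexivity).
      apply IH. apply fmul_set; [exact Hx | reflexivity]. }
  apply (G _ [p]). reflexivity.
Qed.

Lemma F_assoc (a b c : FPt) : fmul (fmul a b) c = fmul a (fmul b c).
Proof.
  apply fp_eq.
  rewrite (@fmul_set _ _ (fp_rep a ++ fp_rep b) (fp_rep c)).
  - rewrite (@fmul_set _ _ (fp_rep a) (fp_rep b ++ fp_rep c)).
    + rewrite app_assoc. reflexivity.
    + apply set_rep.
    + apply fmul_set; apply set_rep.
  - apply fmul_set; apply set_rep.
  - apply set_rep.
Qed.

Lemma F_idem p : fmul (xg theta delta p) (xg theta delta p) = xg theta delta p.
Proof.
  change (fprod theta delta p [p] = fprod theta delta p []).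
  apply fp_eq. rewrite !fprod_set. apply fc_ext. exact (fc_idem theta delta [] [] p).
Qed.
Lemma F_th p q : fmul (xg theta delta p) (xg theta delta q) = fmul (xg theta delta p) (xg theta delta (theta q p)).
Proof.
  change (fprod theta delta p [q] = fprod theta delta p [theta q p]).
  apply fp_eq. rewrite !fprod_set. apply fc_ext. exact (fc_th theta delta [] [] p q).
Qed.
Lemma F_de p q : fmul (xg theta delta p) (xg theta delta q) = fmul (xg theta delta (delta p q)) (xg theta delta q).
Proof.
  change (fprod theta delta p [q] = fprod theta delta (delta p q) [q]).
  apply fp_eq. rewrite !fprod_set. apply fc_ext. exact (fc_de theta delta [] [] p q).
Qed.

Lemma F_surj (a : FPt) : exists p w, a = fprod theta delta p w.
Proof.
  pose proof (fp_rep_spec a) as [Hn Hs]. revert Hn Hs. destruct (fp_rep a) as [|p w].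
  - intro H; contradiction.
  - intros _ Hs. exists p, w. apply fp_eq. rewrite Hs, fprod_set. reflexivity.
Qed.

Lemma F_inj p w q v : fprod theta delta p w = fprod theta delta q v ->
  DW delta p w = DW delta q v /\ RW theta p w = RW theta q v.
Proof.
  intro E. apply (f_equal (@fp_set _ theta delta)) in E. rewrite !fprod_set in E.
  apply fc_of_ext in E. split; [exact (DW_inv HP E) | exact (RW_inv HP E)].
Qed.

Lemma F_main : DRC_semigroup (@fmul P theta delta) (@FD P theta delta) (@FR P theta delta) /\
   proj_generated (@fmul P theta delta) (@FD P theta delta) /\
   exists f : P -> FP theta delta,
     PS_iso theta delta (@fmul P theta delta) (@FD P theta delta) (@FR P theta delta) f.
Proof.
  destruct (@gen_main P theta delta HP FPt (@fmul P theta delta) (xg theta delta)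
     (@FD P theta delta) (@FR P theta delta) F_assoc F_idem F_th F_de F_surj F_inj
     (fun a => eq_refl) (fun a => eq_refl)) as [H1 [H2 H3]].
  split; [exact H1|split; [exact H2|exists (xg theta delta); exact H3]].
Qed.
End FInst.

Section MInst.
Variables (P : Type) (theta delta : P -> P -> P).
Hypothesis HP : proj_alg theta delta.
Notation fc := (fcong theta delta).
Notation MPt := (MP theta delta).

Lemma mp_eq (a b : MPt) : proj1_sig a = proj1_sig b -> a = b.
Proof.
  destruct a as [x hx], b as [y hy]; simpl; intros E. subst y.
  f_equal. apply proof_irrelevance.
Qed.

Lemma M_assoc (a b c : MPt) : mmul (mmul a b) c = mmul a (mmul b c).
Proof. apply mp_eq. reflexivity. Qed.
Lemma M_idem p : mmul (mhat theta delta p) (mhat theta delta p) = mhat theta delta p.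
Proof.
  apply mp_eq. simpl. unfold tmul, hat; simpl. f_equal; apply functional_extensionality; intro x.
  - apply (th_idem HP).
  - apply (de_idem HP).
Qed.
Lemma M_th p q : mmul (mhat theta delta p) (mhat theta delta q) = mmul (mhat theta delta p) (mhat theta delta (theta q p)).
Proof.
  apply mp_eq. simpl. unfold tmul, hat; simpl. f_equal; apply functional_extensionality; intro x.
  - symmetry. apply (pa_th3 HP).
  - symmetry. apply (pa_de5 HP).
Qed.
Lemma M_de p q : mmul (mhat theta delta p) (mhat theta delta q) = mmul (mhat theta delta (delta p q)) (mhat theta delta q).
Proof.
  apply mp_eq. simpl. unfold tmul, hat; simpl. f_equal; apply functional_extensionality; intro x.
  - symmetry. apply (pa_th5 HP).
  - symmetry. apply (pa_de3 HP).
Qed.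

Notation mprod' := (prod (@mmul P theta delta) (mhat theta delta)).

Lemma M_surj (a : MPt) : exists p w, a = mprod' p w.
Proof.
  destruct a as [x hx].
  assert (G : exists p w, proj1_sig (mprod' p w) = x).
  { induction hx as [p|a b ha IHa hb IHb].
    - exists p, []. reflexivity.
    - destruct IHa as [p [w Ea]]. destruct IHb as [q [v Eb]].
      exists p, (w ++ q :: v). rewrite (@prod_app _ _ _ _ M_assoc). simpl. rewrite Ea, Eb. reflexivity. }
  destruct G as [p [w G]]. exists p, w. apply mp_eq. simpl. symmetry; exact G.
Qed.

Lemma mprod_cons p q w : mprod' p (q :: w) = mmul (mhat theta delta p) (mprod' q w).
Proof. exact (@prod_app _ _ _ _ M_assoc p [] q w). Qed.

Lemma msnd w : forall p, fchain theta delta p w ->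
  (forall x, le theta (snd (proj1_sig (mprod' p w)) x) p) /\ snd (proj1_sig (mprod' p w)) (last w p) = p.
Proof.
  induction w as [|q w IH]; intros p Hc.
  - simpl. split; [intro x; apply (le_de_img HP) | apply (pa_de_id HP)].
  - destruct Hc as [[Hp Hq] Hc]. rewrite mprod_cons. rewrite last_cons. simpl.
    split; [intro x; apply (le_de_img HP)|].
    rewrite (proj2 (IH q Hc)). symmetry; exact Hp.
Qed.

Lemma mfst w : forall p, fchain theta delta p w ->
  (forall x, le theta (fst (proj1_sig (mprod' p w)) x) (last w p)) /\ fst (proj1_sig (mprod' p w)) p = last w p.
Proof.
  induction w as [|q w IH]; intros p Hc.
  - simpl. split; [intro x; apply (le_th_img HP) | apply (pa_th_id HP)].
  - destruct Hc as [[Hp Hq] Hc]. rewrite mprod_cons. rewrite last_cons. simpl.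
    destruct (IH q Hc) as [IH1 IH2].
    split; [intro x; apply IH1|].
    rewrite (pa_th_id HP).
    pose proof (@gen_prod _ _ _ _ _ _ M_assoc M_idem M_th M_de q w) as G.
    apply (f_equal (fun a => fst (proj1_sig a) p)) in G. simpl in G.
    etransitivity; [symmetry; exact G|]. rewrite <- Hq. exact IH2.
Qed.

Lemma M_inj p w q v : mprod' p w = mprod' q v ->
  DW delta p w = DW delta q v /\ RW theta p w = RW theta q v.
Proof.
  intro E.
  destruct (normal_form HP w p) as [p1 [w1 [Hc1 Hf1]]].
  destruct (normal_form HP v q) as [q1 [v1 [Hc2 Hf2]]].
  rewrite (DW_inv HP Hf1), (DW_inv HP Hf2), (RW_inv HP Hf1), (RW_inv HP Hf2).
  rewrite (DW_chain HP _ _ Hc1), (DW_chain HP _ _ Hc2).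
  rewrite (@RW_chain P theta delta _ _ Hc1), (@RW_chain P theta delta _ _ Hc2).
  rewrite (@prod_inv _ _ _ _ _ _ M_assoc M_idem M_th M_de _ _ _ _ Hf1), (@prod_inv _ _ _ _ _ _ M_assoc M_idem M_th M_de _ _ _ _ Hf2) in E.
  destruct (msnd _ _ Hc1) as [A1 A2]. destruct (msnd _ _ Hc2) as [B1 B2].
  destruct (mfst _ _ Hc1) as [C1 C2]. destruct (mfst _ _ Hc2) as [D1 D2].
  rewrite E in A1, A2, C1, C2.
  assert (Ep : p1 = q1).
  { apply (antisym HP). rewrite <- A2. apply B1. rewrite <- B2. apply A1. }
  split; [exact Ep|].
  subst q1.
  apply (antisym HP). rewrite <- C2. apply D1. rewrite <- D2. apply C1.
Qed.

Lemma M_main : DRC_semigroup (@mmul P theta delta) (@MD P theta delta) (@MR P theta delta) /\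
   proj_generated (@mmul P theta delta) (@MD P theta delta) /\
   exists g : P -> MP theta delta,
     PS_iso theta delta (@mmul P theta delta) (@MD P theta delta) (@MR P theta delta) g.
Proof.
  destruct (@gen_main P theta delta HP MPt (@mmul P theta delta) (mhat theta delta)
     (@MD P theta delta) (@MR P theta delta) M_assoc M_idem M_th M_de M_surj M_inj
     (fun a => eq_refl) (fun a => eq_refl)) as [H1 [H2 H3]].
  split; [exact H1|split; [exact H2|exists (mhat theta delta); exact H3]].
Qed.
End MInst.

Theorem theorem8p9 (P : Type) (theta delta : P -> P -> P)
  (HP : proj_alg theta delta) :
  (DRC_semigroup (@fmul P theta delta) (@FD P theta delta) (@FR P theta delta) /\
   proj_generated (@fmul P theta delta) (@FD P theta delta) /\
   exists f : P -> FP theta delta,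
     PS_iso theta delta (@fmul P theta delta) (@FD P theta delta) (@FR P theta delta) f) /\
  (DRC_semigroup (@mmul P theta delta) (@MD P theta delta) (@MR P theta delta) /\
   proj_generated (@mmul P theta delta) (@MD P theta delta) /\
   exists g : P -> MP theta delta,
     PS_iso theta delta (@mmul P theta delta) (@MD P theta delta) (@MR P theta delta) g).
Proof.
  split; [exact (F_main HP) | exact (M_main HP)].
Qed.
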